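(* Let $\mathcal{A}=\{1,\dots,m\}$, $\mathcal{B}=\{1,\dots,n\}$ and $\phi:\mathcal{A}\times\mathcal{B}\to\mathbb{R}^d$ with $\|\phi(a,b)\|_2\le L$. Let $\mu^*\in\Delta(\mathcal{A}),\nu^*\in\Delta(\mathcal{B})$ with $\min_{a,b}\{\mu^*(a),\nu^*(b)\}\ge\xi>0$, and let $\hat\mu\in\Delta(\mathcal{A}),\hat\nu\in\Delta(\mathcal{B})$ satisfy $\|\hat\mu-\mu^*\|_1\le\epsilon_\mu$ and $\|\hat\nu-\nu^*\|_1\le\epsilon_\nu$ with $\epsilon_\mu<\xi/2$ and $\epsilon_\nu<\xi/2$. Let $\epsilon_N=\epsilon_\mu+\epsilon_\nu$, $\hat X=X(\hat\mu,\hat\nu)$, $X^*=X(\mu^*,\nu^* )$, $\hat y=y(\hat\mu,\hat\nu)$, $y^*=y(\mu^*,\nu^* )$. Then $$\|\hat X-X^*\|_{op}\le C_X\epsilon_N,\qquad\|\hat y-y^*\|_2\le C_Y\epsilon_N,$$ with $C_X=2L\sqrt{m+n}$ and $C_Y=\sqrt{8(m+n)}/\xi$.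
   Context: For full-support $\mu,\nu$: $A(\nu)\in\mathbb{R}^{(m-1)\times d}$ has row $a-1$ ($a=2,\dots,m$) equal to $\sum_{b'\in\mathcal{B}}\nu(b')(\phi(a,b')-\phi(1,b'))^\top$; $B(\mu)\in\mathbb{R}^{(n-1)\times d}$ has row $b-1$ ($b=2,\dots,n$) equal to $\sum_{a'\in\mathcal{A}}\mu(a')(\phi(a',1)-\phi(a',b))^\top$; $c(\mu)_{a-1}=\log(\mu(a)/\mu(1))$; $d(\nu)_{b-1}=\log(\nu(b)/\nu(1))$; $X(\mu,\nu)=[A(\nu)^\top,B(\mu)^\top]^\top$ and $y(\mu,\nu)=[c(\mu)^\top,d(\nu)^\top]^\top$. $\|\cdot\|_{op}$ is the spectral norm. In the paper, $\hat\mu,\hat\nu$ are empirical frequency estimates of the QRE $(\mu^*,\nu^* )$ and the hypotheses hold on the high-probability event of the policy-estimation lemma. *)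

(* Defs.v *)
From HB Require Import structures.
From mathcomp Require Import all_boot all_order all_algebra.
From mathcomp Require Import classical_sets reals exp.
Set Implicit Arguments. Unset Strict Implicit. Unset Printing Implicit Defensive.
Import Order.TTheory GRing.Theory Num.Theory.
Local Open Scope ring_scope.
Local Open Scope classical_set_scope.

Section Defs.
Variable R : realType.

Definition vnorm2 k (v : 'cV[R]_k) : R := Num.sqrt (\sum_i (v i 0) ^+ 2).

Definition opnorm p q (M : 'M[R]_(p, q)) : R :=
  sup [set vnorm2 (M *m v) | v in [set v : 'cV[R]_q | vnorm2 v <= 1]].

Definition is_distr (T : finType) (p : T -> R) : Prop :=
  (forall t, 0 <= p t) /\ \sum_t p t = 1.

Definition l1dist (T : finType) (p q : T -> R) : R := \sum_t `|p t - q t|.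

(* Action sets A = 'I_m.+1, B = 'I_n.+1; the paper's action "1" is ord0,
   action a = 2..m corresponds to lift ord0 i with i : 'I_m (row a-1 = i). *)
Variables (m n d : nat) (phi : 'I_m.+1 -> 'I_n.+1 -> 'cV[R]_d).

Definition Amat (nu : 'I_n.+1 -> R) : 'M[R]_(m, d) :=
  \matrix_(i < m) (\sum_b nu b *: (phi (lift ord0 i) b - phi ord0 b)^T).

Definition Bmat (mu : 'I_m.+1 -> R) : 'M[R]_(n, d) :=
  \matrix_(j < n) (\sum_a mu a *: (phi a ord0 - phi a (lift ord0 j))^T).

Definition cvec (mu : 'I_m.+1 -> R) : 'cV[R]_m :=
  \col_(i < m) ln (mu (lift ord0 i) / mu ord0).

Definition dvec (nu : 'I_n.+1 -> R) : 'cV[R]_n :=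
  \col_(j < n) ln (nu (lift ord0 j) / nu ord0).

Definition Xmat (mu : 'I_m.+1 -> R) (nu : 'I_n.+1 -> R) : 'M[R]_(m + n, d) :=
  col_mx (Amat nu) (Bmat mu).

Definition yvec (mu : 'I_m.+1 -> R) (nu : 'I_n.+1 -> R) : 'cV[R]_(m + n) :=
  col_mx (cvec mu) (dvec nu).

End Defs.

(* Main.v *)
Require Import Defs.
From HB Require Import structures.
From mathcomp Require Import all_boot all_order all_algebra.
From mathcomp Require Import classical_sets reals exp.
From mathcomp Require Import ring lra.
Import Order.TTheory GRing.Theory Num.Theory.
Set Implicit Arguments. Unset Strict Implicit.
Local Open Scope ring_scope.

Section H.
Variable R : realType.

Definition dot {k} (u v : 'cV[R]_k) : R := \sum_i u i 0 * v i 0.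

Lemma CS_sq {k} (a b : 'I_k -> R) :
  (\sum_i a i * b i) ^+ 2 <= (\sum_i a i ^+ 2) * (\sum_i b i ^+ 2).
Proof.
have H0 : 0 <= \sum_i \sum_j (a i * b j - a j * b i) ^+ 2.
  by apply: sumr_ge0 => i _; apply: sumr_ge0 => j _; exact: sqr_ge0.
have E1 : \sum_i \sum_j (a i * b j - a j * b i) ^+ 2 =
  \sum_i \sum_j (a i ^+ 2 * b j ^+ 2) + \sum_i \sum_j (a j ^+ 2 * b i ^+ 2)
  - 2 * \sum_i \sum_j ((a i * b i) * (a j * b j)).
  rewrite mulr_sumr -big_split /= -sumrB; apply: eq_bigr => i _.
  rewrite mulr_sumr -big_split /= -sumrB; apply: eq_bigr => j _.
  ring.
have E2 : \sum_i \sum_j (a i ^+ 2 * b j ^+ 2) = (\sum_i a i ^+ 2) * (\sum_i b i ^+ 2).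
  by rewrite big_distrl; apply: eq_bigr => i _; rewrite big_distrr.
have E3 : \sum_i \sum_j (a j ^+ 2 * b i ^+ 2) = (\sum_i a i ^+ 2) * (\sum_i b i ^+ 2).
  by rewrite mulrC big_distrl; apply: eq_bigr => i _; rewrite big_distrr; apply: eq_bigr => j _; rewrite mulrC.
have E4 : \sum_i \sum_j ((a i * b i) * (a j * b j)) = (\sum_i a i * b i) ^+ 2.
  by rewrite expr2 big_distrl; apply: eq_bigr => i _; rewrite big_distrr.
rewrite E1 E2 E3 E4 in H0; lra.
Qed.

Lemma vnorm2_ge0 k (u : 'cV[R]_k) : 0 <= vnorm2 u.
Proof. exact: sqrtr_ge0. Qed.

Lemma CS k (u v : 'cV[R]_k) : `|dot u v| <= vnorm2 u * vnorm2 v.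
Proof.
rewrite /vnorm2 -sqrtrM; last by apply: sumr_ge0 => i _; exact: sqr_ge0.
rewrite -sqrtr_sqr ler_sqrt; last first.
  by apply: mulr_ge0; apply: sumr_ge0 => i _; exact: sqr_ge0.
by rewrite /dot; exact: (CS_sq (fun i => u i 0) (fun i => v i 0)).
Qed.

Lemma ln_sub_le (x y : R) : 0 < x -> 0 < y -> y * (ln x - ln y) <= x - y.
Proof.
move=> x0 y0; rewrite -ln_div ?posrE //.
have -> : x / y = 1 + (x / y - 1) by ring.
have h : -1 < x / y - 1 by rewrite ltrBrDr addNr divr_gt0.
have := le_ln1Dx h => hl.
have -> : x - y = y * (x / y - 1) by field; rewrite gt_eqF.
by rewrite ler_pM2l.
Qed.

Lemma ln_abs (c x y : R) : 0 < c -> c <= x -> c <= y ->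
  c * `|ln x - ln y| <= `|x - y|.
Proof.
move=> c0 cx cy.
have x0 : 0 < x by exact: lt_le_trans cx.
have y0 : 0 < y by exact: lt_le_trans cy.
have h1 := ln_sub_le x0 y0; have h2 := ln_sub_le y0 x0.
case: (lerP 0 (ln x - ln y)) => hD.
  rewrite (ger0_norm hD); apply: le_trans (ler_norm _).
  by apply: le_trans h1; rewrite ler_wpM2r.
rewrite (ltr0_norm hD) distrC; apply: le_trans (ler_norm _).
apply: le_trans h2; rewrite opprB ler_wpM2r //; lra.
Qed.

Lemma l1_term (T : finType) (p q : T -> R) a : `|p a - q a| <= l1dist p q.
Proof.
rewrite /l1dist (bigD1 a) //= lerDl; apply: sumr_ge0 => t _; exact: normr_ge0.
Qed.

Lemma l1_ge0 (T : finType) (p q : T -> R) : 0 <= l1dist p q.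
Proof. apply: sumr_ge0 => t _; exact: normr_ge0. Qed.

Lemma l1_two k (p q : 'I_k.+1 -> R) (i : 'I_k) :
  `|p (lift ord0 i) - q (lift ord0 i)| + `|p ord0 - q ord0| <= l1dist p q.
Proof.
rewrite /l1dist (bigD1 (lift ord0 i)) //= lerD2l.
rewrite (bigD1 ord0) //=.
rewrite lerDl; apply: sumr_ge0 => t _; exact: normr_ge0.
Qed.

Lemma ycomp k (mh ms : 'I_k.+1 -> R) (xi e : R) :
  0 < xi -> (forall a, xi <= ms a) -> l1dist mh ms <= e -> e < xi / 2 ->
  forall i : 'I_k,
  (xi / 2) * `|ln (mh (lift ord0 i) / mh ord0) - ln (ms (lift ord0 i) / ms ord0)| <= e.
Proof.
move=> xi0 hms hl he i.
have c0 : 0 < xi / 2 by rewrite divr_gt0.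
have hmh : forall a, xi / 2 <= mh a.
  move=> a; have := l1_term mh ms a; have := hms a.
  rewrite real_lter_distl ?num_real //; move: (mh a) (ms a) => x y; lra.
have hmsc : forall a, xi / 2 <= ms a by move=> a; have := hms a; lra.
have pos : forall a, 0 < mh a by move=> a; exact: lt_le_trans c0 (hmh a).
have pos' : forall a, 0 < ms a by move=> a; exact: lt_le_trans c0 (hmsc a).
rewrite !ln_div ?posrE //.
have h1 := ln_abs c0 (hmh (lift ord0 i)) (hmsc (lift ord0 i)).
have h2 := ln_abs c0 (hmh ord0) (hmsc ord0).
have h3 := l1_two mh ms i.
set A := ln (mh (lift ord0 i)) - ln (ms (lift ord0 i)) in h1.
set B := ln (mh ord0) - ln (ms ord0) in h2.
have -> : ln (mh (lift ord0 i)) - ln (mh ord0) - (ln (ms (lift ord0 i)) - ln (ms ord0)) = A - B.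
  by rewrite /A /B; ring.
apply: le_trans (_ : xi / 2 * (`|A| + `|B|) <= _).
  by rewrite ler_wpM2l ?(ltW c0) // ler_normB.
lra.
Qed.

Lemma sum_bound (T : finType) (D f : T -> R) (K : R) :
  (forall t, `|f t| <= K) -> `|\sum_t D t * f t| <= K * \sum_t `|D t|.
Proof.
move=> hf; apply: le_trans (ler_norm_sum _ _ _) _.
rewrite mulr_sumr; apply: ler_sum => t _; rewrite normrM mulrC.
by rewrite ler_wpM2r.
Qed.

Lemma vnorm_col p q (w : 'cV[R]_(p + q)) (K1 K2 : R) :
  (forall i, `|w (lshift q i) 0| <= K1) -> (forall j, `|w (rshift p j) 0| <= K2) ->
  vnorm2 w <= Num.sqrt (p%:R * K1 ^+ 2 + q%:R * K2 ^+ 2).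
Proof.
move=> h1 h2; rewrite /vnorm2 ler_sqrt; last first.
  have k1 : 0 <= K1 ^+ 2 by exact: sqr_ge0.
  have k2 : 0 <= K2 ^+ 2 by exact: sqr_ge0.
  by apply: addr_ge0; apply: mulr_ge0.
rewrite big_split_ord /=; apply: lerD.
  apply: le_trans (_ : \sum_(i < p) K1 ^+ 2 <= _).
    apply: ler_sum => i _; rewrite -real_normK ?num_real //.
    by rewrite lerXn2r ?nnegrE // (le_trans _ (h1 i)).
  by rewrite sumr_const card_ord mulr_natl.
apply: le_trans (_ : \sum_(i < q) K2 ^+ 2 <= _).
  apply: ler_sum => i _; rewrite -real_normK ?num_real //.
  by rewrite lerXn2r ?nnegrE // (le_trans _ (h2 i)).
by rewrite sumr_const card_ord mulr_natl.
Qed.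

Lemma arithX (m n : nat) (L e1 e2 : R) : 0 <= L -> 0 <= e1 -> 0 <= e2 ->
  Num.sqrt (m%:R * (2 * L * e2) ^+ 2 + n%:R * (2 * L * e1) ^+ 2)
  <= 2 * L * Num.sqrt ((m.+1 + n.+1)%:R) * (e1 + e2).
Proof.
move=> L0 h1 h2.
have s0 := sqrtr_ge0 ((m.+1 + n.+1)%:R : R).
have r0 : 0 <= 2 * L * Num.sqrt ((m.+1 + n.+1)%:R) * (e1 + e2).
  by apply: mulr_ge0; [apply: mulr_ge0; [lra|]|lra].
rewrite -(ger0_norm r0) -sqrtr_sqr ler_sqrt ?sqr_ge0 //.
rewrite !exprMn sqr_sqrtr ?ler0n //.
have -> : (m.+1 + n.+1)%:R = m%:R + n%:R + 2 :> R.
  by rewrite -[m.+1]addn1 -[n.+1]addn1 !natrD; ring.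
have M0 : 0 <= m%:R :> R by exact: ler0n.
have N0 : 0 <= n%:R :> R by exact: ler0n.
set M := m%:R : R in M0 *; set N := n%:R : R in N0 *.
have t0 : 0 <= L ^+ 2 by exact: sqr_ge0.
have a1 : e2 ^+ 2 <= (e1 + e2) ^+ 2 by nra.
have a2 : e1 ^+ 2 <= (e1 + e2) ^+ 2 by nra.
have b1 : M * (L ^+ 2 * e2 ^+ 2) <= M * (L ^+ 2 * (e1 + e2) ^+ 2).
  by rewrite ler_wpM2l // ler_wpM2l.
have b2 : N * (L ^+ 2 * e1 ^+ 2) <= N * (L ^+ 2 * (e1 + e2) ^+ 2).
  by rewrite ler_wpM2l // ler_wpM2l.
have b3 : 0 <= L ^+ 2 * (e1 + e2) ^+ 2 by apply: mulr_ge0 => //; exact: sqr_ge0.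
nra.
Qed.

Lemma arithY (m n : nat) (xi e1 e2 : R) : 0 < xi -> 0 <= e1 -> 0 <= e2 ->
  Num.sqrt (m%:R * (e1 / (xi / 2)) ^+ 2 + n%:R * (e2 / (xi / 2)) ^+ 2)
  <= Num.sqrt (8 * (m.+1 + n.+1)%:R) / xi * (e1 + e2).
Proof.
move=> xi0 h1 h2.
have s0 := sqrtr_ge0 (8 * (m.+1 + n.+1)%:R : R).
have r0 : 0 <= Num.sqrt (8 * (m.+1 + n.+1)%:R) / xi * (e1 + e2).
  by apply: mulr_ge0; [apply: divr_ge0; [|lra]|lra].
rewrite -(ger0_norm r0) -sqrtr_sqr ler_sqrt ?sqr_ge0 //.
rewrite !exprMn sqr_sqrtr ?mulr_ge0 ?ler0n //.
have -> : (m.+1 + n.+1)%:R = m%:R + n%:R + 2 :> R.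
  by rewrite -[m.+1]addn1 -[n.+1]addn1 !natrD; ring.
have M0 : 0 <= m%:R :> R by exact: ler0n.
have N0 : 0 <= n%:R :> R by exact: ler0n.
set M := m%:R : R in M0 *; set N := n%:R : R in N0 *.
have -> : (xi / 2)^-1 = 2 * xi^-1 by field; rewrite gt_eqF.
set z := xi^-1.
have t0 : 0 <= z ^+ 2 by exact: sqr_ge0.
have a1 : e2 ^+ 2 <= (e1 + e2) ^+ 2 by nra.
have a2 : e1 ^+ 2 <= (e1 + e2) ^+ 2 by nra.
have b1 : M * (z ^+ 2 * e1 ^+ 2) <= M * (z ^+ 2 * (e1 + e2) ^+ 2).
  by rewrite ler_wpM2l // ler_wpM2l.
have b2 : N * (z ^+ 2 * e2 ^+ 2) <= N * (z ^+ 2 * (e1 + e2) ^+ 2).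
  by rewrite ler_wpM2l // ler_wpM2l.
have b3 : 0 <= z ^+ 2 * (e1 + e2) ^+ 2 by apply: mulr_ge0 => //; exact: sqr_ge0.
rewrite exprMn.
nra.
Qed.

Lemma Aentry m n d (phi : 'I_m.+1 -> 'I_n.+1 -> 'cV[R]_d) nu (v : 'cV[R]_d) i :
  (Amat phi nu *m v) i 0 =
  \sum_b nu b * (dot (phi (lift ord0 i) b) v - dot (phi ord0 b) v).
Proof.
rewrite mxE /dot; under [RHS]eq_bigr => b _ do rewrite -sumrB mulr_sumr.
rewrite exchange_big /=; apply: eq_bigr => k _.
rewrite !mxE summxE big_distrl /=; apply: eq_bigr => b _.
rewrite !mxE; ring.
Qed.

Lemma Bentry m n d (phi : 'I_m.+1 -> 'I_n.+1 -> 'cV[R]_d) mu (v : 'cV[R]_d) j :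
  (Bmat phi mu *m v) j 0 =
  \sum_a mu a * (dot (phi a ord0) v - dot (phi a (lift ord0 j)) v).
Proof.
rewrite mxE /dot; under [RHS]eq_bigr => b _ do rewrite -sumrB mulr_sumr.
rewrite exchange_big /=; apply: eq_bigr => k _.
rewrite !mxE summxE big_distrl /=; apply: eq_bigr => b _.
rewrite !mxE; ring.
Qed.
End H.

Theorem lemma2 (R : realType) (m n d : nat)
  (phi : 'I_m.+1 -> 'I_n.+1 -> 'cV[R]_d) (L xi eps_mu eps_nu : R)
  (mus muh : 'I_m.+1 -> R) (nus nuh : 'I_n.+1 -> R) :
  (forall a b, vnorm2 (phi a b) <= L) ->
  is_distr mus -> is_distr nus -> is_distr muh -> is_distr nuh ->
  0 < xi ->
  (forall a, xi <= mus a) -> (forall b, xi <= nus b) ->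
  l1dist muh mus <= eps_mu -> l1dist nuh nus <= eps_nu ->
  eps_mu < xi / 2 -> eps_nu < xi / 2 ->
  let epsN := eps_mu + eps_nu in
  let CX := 2 * L * Num.sqrt ((m.+1 + n.+1)%:R) in
  let CY := Num.sqrt (8 * (m.+1 + n.+1)%:R) / xi in
  opnorm (Xmat phi muh nuh - Xmat phi mus nus) <= CX * epsN /\
  vnorm2 (yvec muh nuh - yvec mus nus) <= CY * epsN.
Proof.
move=> hL _ _ _ _ xi0 hmu hnu lmu lnu emu enu epsN CX CY.
have L0 : 0 <= L by apply: le_trans (hL ord0 ord0); exact: vnorm2_ge0.
have emu0 : 0 <= eps_mu by apply: le_trans lmu; exact: l1_ge0.
have enu0 : 0 <= eps_nu by apply: le_trans lnu; exact: l1_ge0.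
split.
  rewrite /opnorm; apply: ge_sup.
    exists (vnorm2 ((Xmat phi muh nuh - Xmat phi mus nus) *m 0)); exists 0 => //.
    rewrite /= /vnorm2 big1 ?sqrtr0 ?ler01 // => i _; by rewrite mxE expr2 mulr0.
  move=> _ [v hv <-].
  have E : (Xmat phi muh nuh - Xmat phi mus nus) *m v =
    col_mx ((Amat phi nuh - Amat phi nus) *m v) ((Bmat phi muh - Bmat phi mus) *m v).
    by rewrite /Xmat opp_col_mx add_col_mx mul_col_mx.
  have hd : forall p q : 'cV[R]_d, vnorm2 p <= L -> vnorm2 q <= L ->
      `|dot p v - dot q v| <= 2 * L.
    move=> p q hp hq; apply: le_trans (ler_normB _ _) _.
    have v0 := vnorm2_ge0 v.
    have c1 : `|dot p v| <= L.
      apply: le_trans (CS p v) _; rewrite -[L]mulr1; apply: ler_pM => //; exact: vnorm2_ge0.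
    have c2 : `|dot q v| <= L.
      apply: le_trans (CS q v) _; rewrite -[L]mulr1; apply: ler_pM => //; exact: vnorm2_ge0.
    lra.
  rewrite E; apply: le_trans (vnorm_col (K1 := 2 * L * eps_nu) (K2 := 2 * L * eps_mu) _ _) _.
  - move=> i; rewrite col_mxEu mulmxBl [X in `|X|]mxE [X in _ + X]mxE !Aentry -sumrB.
    under eq_bigr do rewrite -mulrBl.
    apply: le_trans (sum_bound (K := 2 * L) _ _) _.
      by move=> b; apply: hd.
    by rewrite ler_wpM2l //; lra.
  - move=> j; rewrite col_mxEd mulmxBl [X in `|X|]mxE [X in _ + X]mxE !Bentry -sumrB.
    under eq_bigr do rewrite -mulrBl.
    apply: le_trans (sum_bound (K := 2 * L) _ _) _.
      by move=> a; apply: hd.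
    by rewrite ler_wpM2l //; lra.
  - by rewrite /CX /epsN; exact: (arithX m n L0 emu0 enu0).
have E : yvec muh nuh - yvec mus nus = col_mx (cvec muh - cvec mus) (dvec nuh - dvec nus).
  by rewrite /yvec opp_col_mx add_col_mx.
have c0 : 0 < xi / 2 by rewrite divr_gt0.
rewrite E; apply: le_trans (vnorm_col (K1 := eps_mu / (xi / 2)) (K2 := eps_nu / (xi / 2)) _ _) _.
- move=> i; rewrite col_mxEu !mxE ler_pdivlMr // mulrC.
  exact: ycomp.
- move=> j; rewrite col_mxEd !mxE ler_pdivlMr // mulrC.
  exact: ycomp.
- by rewrite /CY /epsN; apply: arithY.
Qed.
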